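(* Let $T$ be a $\pi$-increasing tree whose vertex-set contains $1$ and is not equal to $\{1\}$, and let $M$ be its maximum vertex. Then the blocks $\{1\}$ and $\pi^M$ lie in different connected components of $G_M(T)$. In particular, $T$ is reducible.
   Context: Standing assumptions: $r\ge2$ and $\pi$ is a set partition of $\{1,\dots,r\}$ having $\{1\}$ as a block; $\pi^x$ denotes the block containing $x$, and $\mu_i$ the maximum of block $\pi_i$. An unordered increasing tree is a rooted tree on distinct positive integers, sons unordered, each son larger than its father. A $\pi$-increasing tree is an unordered increasing tree $T$ whose vertex-set is a union of blocks of $\pi$ and such that for any two elements $i<j$ of a same block of $\pi$ contained in $V(T)$, $i$ is an ancestor of $j$ in $T$. $v$-decomposition: for a vertex $v$ of $T$ with chain $a_1<\dots<a_\ell=v$ from the root to $v$, removing the chain edges leaves components $T^{(a_j)}$ rooted at $a_j$. $v$-dependence graph $G_v(T)$: directed graph on the blocks of $\pi$ contained in $V(T)$; for each such block $\pi_i$ whose maximum $\mu_i$ is not on the chain $a_1,\dots,a_\ell$, $\mu_i$ is a non-root vertex of a unique $T^{(a_j)}$ and there is an edge (possibly a loop) $\pi_i\to\pi^{a_j}$; no other edges. Connected components are taken ignoring directions. A $\pi$-increasing tree with maximum vertex $M$ is irreducible if $G_M(T)$ is connected, reducible otherwise. *)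

(* Defs.v *)
From mathcomp Require Import all_boot.
From mathcomp Require Import finmap.
From Stdlib Require Import Relations.Relation_Operators.

Set Implicit Arguments.
Unset Strict Implicit.
Unset Printing Implicit Defensive.

Local Open Scope fset_scope.

Definition set_partition (r : nat) (pi : {fset {fset nat}}) : Prop :=
  (forall B, B \in pi -> B != fset0) /\
  (forall B C, B \in pi -> C \in pi -> B != C -> B `&` C = fset0) /\
  (forall x : nat, (exists2 B, B \in pi & x \in B) <-> (1 <= x <= r)%N).

Definition is_max (B : {fset nat}) (m : nat) : Prop :=
  m \in B /\ forall x, x \in B -> (x <= m)%N.

(* An unordered increasing tree with vertex set V, root rt, and father
   function par (only meaningful on the non-root vertices of V). *)
Definition increasing_tree (V : {fset nat}) (rt : nat) (par : nat -> nat) : Prop :=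
  rt \in V /\
  (forall v, v \in V -> (0 < v)%N) /\
  (forall v, v \in V -> v != rt -> par v \in V /\ (par v < v)%N).

Inductive anc (rt : nat) (par : nat -> nat) (a : nat) : nat -> Prop :=
  | anc_refl : anc rt par a a
  | anc_step : forall w, w != rt -> anc rt par a (par w) -> anc rt par a w.

Definition pi_increasing_tree (pi : {fset {fset nat}})
    (V : {fset nat}) (rt : nat) (par : nat -> nat) : Prop :=
  increasing_tree V rt par /\
  (forall x, x \in V -> exists2 B, B \in pi & (x \in B) && (B `<=` V)) /\
  (forall B i j, B \in pi -> B `<=` V -> i \in B -> j \in B -> (i < j)%N ->
     anc rt par i j).

Definition dep_vertex (pi : {fset {fset nat}}) (V : {fset nat}) (B : {fset nat}) :=
  B \in pi /\ B `<=` V.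

(* The chain a_1 < ... < a_l = v consists of the ancestors of v.
   After removing the chain edges, a vertex w not on the chain lies in the
   component T^(a) (as a non-root vertex) where a is its nearest ancestor
   on the chain.  Edge B -> C of G_v(T): mu_B is not on the chain, and
   lies in T^(a) with a in C. *)
Definition dep_edge (pi : {fset {fset nat}}) (V : {fset nat}) (rt : nat)
    (par : nat -> nat) (v : nat) (B C : {fset nat}) : Prop :=
  dep_vertex pi V B /\ dep_vertex pi V C /\
  exists m, is_max B m /\ ~ anc rt par m v /\
  exists a, a \in C /\ anc rt par a v /\ anc rt par a m /\
    (forall u, anc rt par u v -> anc rt par u m -> anc rt par u a).

Definition dep_connected (pi : {fset {fset nat}}) (V : {fset nat}) (rt : nat)
    (par : nat -> nat) (v : nat) : {fset nat} -> {fset nat} -> Prop :=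
  clos_refl_trans {fset nat}
    (fun B C => dep_edge pi V rt par v B C \/ dep_edge pi V rt par v C B).

Definition irreducible (pi : {fset {fset nat}}) (V : {fset nat}) (rt : nat)
    (par : nat -> nat) : Prop :=
  forall M, M \in V -> (forall x, x \in V -> (x <= M)%N) ->
  forall B C, dep_vertex pi V B -> dep_vertex pi V C ->
    dep_connected pi V rt par M B C.

Definition reducible pi V rt par : Prop := ~ irreducible pi V rt par.

(* Main.v *)
Require Import Defs.
From mathcomp Require Import all_boot.
From mathcomp Require Import finmap.
From mathcomp Require Import zify.
From Stdlib Require Import Relations.Relation_Operators.
Local Open Scope fset_scope.

Lemma anc_rt_inv rt par c : anc rt par c rt -> c = rt.
Proof. intros H; inversion H; subst; [done| by rewrite eqxx in H0]. Qed.

Lemma anc_trans rt par a b c : anc rt par a b -> anc rt par b c -> anc rt par a c.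
Proof. intros Hab Hbc; induction Hbc; [done| by apply anc_step]. Qed.

Definition Pin rt par M w := forall c, anc rt par c M -> c != rt -> ~ anc rt par c w.
Definition Sin rt par M (B : {fset nat}) := forall x, x \in B -> Pin rt par M x.

Lemma rt_min V rt par : increasing_tree V rt par ->
  forall v, v \in V -> (rt <= v)%N.
Proof.
move=> [Hrt [Hpos Hpar]] v.
elim: v {-2}v (leqnn v) => [|n IH] v Hv HvV.
  by move: (Hpos _ HvV); rewrite (leqn0 _ ) in Hv; move/eqP: Hv => ->.
case: (eqVneq v rt) => [->//|Hne].
have [HpV Hlt] := Hpar _ HvV Hne.
have Hpv : (par v <= n)%N by apply: leq_trans (_ : par v < v)%N Hv.
have := IH (par v) Hpv HpV.
by move=> H; apply: leq_trans H (ltnW Hlt).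
Qed.

Theorem proposition3p8 (r : nat) (pi : {fset {fset nat}})
  (Hr : (2 <= r)%N) (Hpi : set_partition r pi) (H1 : [fset 1%N] \in pi)
  (V : {fset nat}) (rt : nat) (par : nat -> nat)
  (HT : pi_increasing_tree pi V rt par)
  (HV1 : 1%N \in V) (HVne : V != [fset 1%N])
  (M : nat) (HM : M \in V) (HMmax : forall x, x \in V -> (x <= M)%N) :
  (forall BM, BM \in pi -> M \in BM ->
     ~ dep_connected pi V rt par M [fset 1%N] BM) /\
  reducible pi V rt par.
Proof.
have [HTi [Hcov Hanc]] := HT.
have [Hrt [Hpos Hpar]] := HTi.
have Hrt1 : rt = 1%N.
  apply/eqP; rewrite eqn_leq (@rt_min V rt par HTi 1 HV1) /=; exact: Hpos.
subst rt.
have Prt : Pin 1 par M 1.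
  by move=> c _ Hc /anc_rt_inv E; rewrite E eqxx in Hc.
have HM1 : M != 1%N.
  apply/negP=> /eqP EM; apply/negP: HVne; apply/negPn/eqP.
  apply/fsetP=> x; rewrite inE; apply/idP/idP => [Hx|/eqP->//].
  have := HMmax _ Hx; have := Hpos _ Hx; rewrite EM; lia.
have anc_in_block : forall B m x, dep_vertex pi V B -> is_max B m -> x \in B ->
    anc 1 par x m.
  move=> B m x [HB HBV] [Hm Hmax] Hx.
  case: (ltngtP x m) => [Hlt||->]; last by constructor.
  - exact: Hanc HB HBV Hx Hm Hlt.
  - by move=> H; have := Hmax _ Hx; lia.
have step1 : forall B C, dep_edge pi V 1 par M B C -> Sin 1 par M C -> Sin 1 par M B.
  move=> B C [HB [HC [m [Hm [Hnm [a [HaC [HaM [Ham Hnear]]]]]]]]] HS x Hx c HcM Hc Hcx.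
  have Ha1 : a = 1%N.
    apply/eqP; apply/negPn/negP => Hne; exact: (HS a HaC a HaM Hne (anc_refl _ _ _)).
  subst a.
  have Hcm := @anc_trans 1 par c x m Hcx (anc_in_block _ _ _ HB Hm Hx).
  have E := @anc_rt_inv 1 par c (Hnear c HcM Hcm); by rewrite E eqxx in Hc.
have step2 : forall B C, dep_edge pi V 1 par M B C -> Sin 1 par M B -> Sin 1 par M C.
  move=> B C [HB [[HC HCV] [m [Hm [Hnm [a [HaC [HaM [Ham Hnear]]]]]]]]] HS.
  have Ha1 : a = 1%N.
    apply/eqP; apply/negPn/negP => Hne.
    exact: (HS m (proj1 Hm) a HaM Hne Ham).
  subst a.
  have EC : C = [fset 1%N].
    have [_ [Hdisj _]] := Hpi.
    case: (eqVneq C [fset 1%N]) => // Hne.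
    have := Hdisj _ _ HC H1 Hne => /fsetP /(_ 1%N).
    by rewrite !inE HaC eqxx.
  by rewrite EC => x; rewrite inE => /eqP ->.
have main : forall BM, BM \in pi -> M \in BM ->
     ~ dep_connected pi V 1 par M [fset 1%N] BM.
  move=> BM HBM HMB Hcon.
  have HS : Sin 1 par M BM.
    have : Sin 1 par M [fset 1%N] -> Sin 1 par M BM.
      elim: Hcon.
      - by move=> x y [E|E] HS; [exact: step2 E HS | exact: step1 E HS].
      - by [].
      - by move=> x y z _ IH1 _ IH2 HS; apply IH2, IH1.
    apply; by move=> x; rewrite inE => /eqP ->.
  exact: (HS M HMB M (anc_refl _ _ _) HM1 (anc_refl _ _ _)).
split => //.
move=> Hirr.
have [B HB /andP [HMB HBV]] := Hcov _ HM.
apply: (main B HB HMB).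
apply: Hirr => //.
split => //; apply/fsubsetP=> x; rewrite inE => /eqP ->//.
Qed.
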